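(* Let $\mathbb{C}$ be a locally small category and $\mathbb{C}_{\mathit{fin}}$ a full subcategory satisfying (C1)–(C5) below. Let $\mathbb{A}$ be a full subcategory of $\mathbb{C}_{\mathit{fin}}$ and let $F\in\mathrm{Ob}(\mathbb{C})$ be universal and locally finite for $\mathbb{A}$. If $\mathbb{A}$ has finite Ramsey degrees, then for every $A\in\mathrm{Ob}(\mathbb{A})$ there exists an essential coloring $\gamma_A:\hom(A,F)\to\{0,\dots,t_{\mathbb{A}}(A)-1\}$.
   Context: Write $A\to B$ if $\hom(A,B)\ne\varnothing$. Conditions: (C1) all morphisms of $\mathbb{C}$ are monomorphisms; (C2) $\mathrm{Ob}(\mathbb{C}_{\mathit{fin}})$ is a set; (C3) $\hom(A,B)$ is finite for $A,B\in\mathrm{Ob}(\mathbb{C}_{\mathit{fin}})$; (C4) for every $F\in\mathrm{Ob}(\mathbb{C})$ there is $A\in\mathrm{Ob}(\mathbb{C}_{\mathit{fin}})$ with $A\to F$; (C5) for every $B\in\mathrm{Ob}(\mathbb{C}_{\mathit{fin}})$ the set $\{A\in\mathrm{Ob}(\mathbb{C}_{\mathit{fin}}):A\to B\}$ is finite. $F$ is universal for $\mathbb{A}$ if $A\to F$ for all $A\in\mathrm{Ob}(\mathbb{A})$. $F$ is locally finite for $\mathbb{A}$ if for all $A,B\in\mathrm{Ob}(\mathbb{A})$, $e\in\hom(A,F)$, $f\in\hom(B,F)$ there exist $D\in\mathrm{Ob}(\mathbb{A})$, $r\in\hom(D,F)$, $p\in\hom(A,D)$, $q\in\hom(B,D)$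 with $r\cdot p=e$, $r\cdot q=f$, such that for every $H\in\mathrm{Ob}(\mathbb{C})$, $r'\in\hom(H,F)$, $p'\in\hom(A,H)$, $q'\in\hom(B,H)$ with $r'\cdot p'=e$, $r'\cdot q'=f$ there is $s\in\hom(D,H)$ with $r'\cdot s=r$, $s\cdot p=p'$, $s\cdot q=q'$. $C\to(B)^A_{k,t}$ means that for every $\chi:\hom(A,C)\to\{0,\dots,k-1\}$ there is $w\in\hom(B,C)$ with $|\chi(w\cdot\hom(A,B))|\le t$. $t_{\mathbb{A}}(A)$ is the least positive $n$ such that for all $k\ge2$ and all $B\in\mathrm{Ob}(\mathbb{A})$ there is $C\in\mathrm{Ob}(\mathbb{A})$ with $C\to(B)^A_{k,n}$, and $\infty$ otherwise; $\mathbb{A}$ has finite Ramsey degrees if $t_{\mathbb{A}}(A)<\infty$ for all $A$. For $\chi:\hom(A,F)\to\{0,\dots,k-1\}$ and $w\in\hom(B,F)$, $\chi^{(w)}(f)=\chi(w\cdot f)$; $\ker g=\{(x,y):g(x)=g(y)\}$. For a positive integer $t$, a coloring $\lambda:\hom(A,B)\to\{0,\dots,t-1\}$ is essential at $B$ if for every $k\ge2$ and every $\chi:\hom(A,F)\to\{0,\dots,k-1\}$ there is $w\in\hom(B,F)$ with $\ker\lambda\subseteq\ker\chi^{(w)}$; a coloring $\gamma:\hom(A,F)\to\{0,\dots,t-1\}$ is essential if $\gamma^{(w)}$ is essential at $B$ for every $B\in\mathrm{Ob}(\mathbb{A})$ with $A\to B$ and every $w\in\hom(B,F)$. *)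

(* Defs.v *)
From Stdlib Require Import List Arith.
Import ListNotations.

Set Implicit Arguments.
Unset Strict Implicit.

Record Category := {
  Ob :> Type;
  Hom : Ob -> Ob -> Type;
  idm : forall A, Hom A A;
  comp : forall A B C, Hom B C -> Hom A B -> Hom A C;
  comp_assoc : forall A B C D (h : Hom C D) (g : Hom B C) (f : Hom A B),
      comp h (comp g f) = comp (comp h g) f;
  comp_id_l : forall A B (f : Hom A B), comp (idm B) f = f;
  comp_id_r : forall A B (f : Hom A B), comp f (idm A) = f
}.

Arguments Hom {C} : rename.
Arguments idm {C} : rename.
Arguments comp {C} {A B C0} : rename.

Definition arrow (C : Category) (A B : Ob C) : Prop := inhabited (Hom A B).

Definition finite_type (T : Type) : Prop := exists l : list T, forall x, In x l.

Definition is_mono (C : Category) (A B : Ob C) (h : Hom A B) : Prop :=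
  forall X (f g : Hom X A), comp h f = comp h g -> f = g.

(* Full subcategories are given by predicates on objects. *)
Definition C1 (C : Category) : Prop :=
  forall (A B : Ob C) (h : Hom A B), is_mono h.
(* (C2) "Ob(C_fin) is a set" is automatic: Cfin is a predicate on the type Ob C. *)
Definition C3 (C : Category) (Cfin : Ob C -> Prop) : Prop :=
  forall A B : Ob C, Cfin A -> Cfin B -> finite_type (Hom A B).
Definition C4 (C : Category) (Cfin : Ob C -> Prop) : Prop :=
  forall F : Ob C, exists A : Ob C, Cfin A /\ arrow A F.
Definition C5 (C : Category) (Cfin : Ob C -> Prop) : Prop :=
  forall B : Ob C, Cfin B ->
    exists l : list (Ob C), forall A : Ob C, Cfin A -> arrow A B -> In A l.

Definition universal (C : Category) (Aob : Ob C -> Prop) (F : Ob C) : Prop :=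
  forall A : Ob C, Aob A -> arrow A F.

Definition locally_finite (C : Category) (Aob : Ob C -> Prop) (F : Ob C) : Prop :=
  forall (A B : Ob C), Aob A -> Aob B ->
  forall (e : Hom A F) (f : Hom B F),
  exists (D : Ob C) (r : Hom D F) (p : Hom A D) (q : Hom B D),
    Aob D /\ comp r p = e /\ comp r q = f /\
    forall (H : Ob C) (r' : Hom H F) (p' : Hom A H) (q' : Hom B H),
      comp r' p' = e -> comp r' q' = f ->
      exists s : Hom D H, comp r' s = r /\ comp s p = p' /\ comp s q = q'.

Definition coloring (X : Type) (k : nat) (chi : X -> nat) : Prop :=
  forall x, chi x < k.

Definition ramsey_arrow (C : Category) (Cc B A : Ob C) (k t : nat) : Prop :=
  forall chi : Hom A Cc -> nat, coloring k chi ->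
  exists w : Hom B Cc,
    exists l : list nat, length l <= t /\ forall f : Hom A B, In (chi (comp w f)) l.

(* the property whose least positive witness is t_A(A) *)
Definition ramsey_bound (C : Category) (Aob : Ob C -> Prop) (A : Ob C) (n : nat) : Prop :=
  forall k, 2 <= k -> forall B : Ob C, Aob B ->
    exists Cc : Ob C, Aob Cc /\ ramsey_arrow Cc B A k n.

Definition ramsey_degree_is (C : Category) (Aob : Ob C -> Prop) (A : Ob C) (t : nat) : Prop :=
  0 < t /\ ramsey_bound Aob A t /\ forall n, 0 < n -> ramsey_bound Aob A n -> t <= n.

Definition finite_ramsey_degrees (C : Category) (Aob : Ob C -> Prop) : Prop :=
  forall A : Ob C, Aob A -> exists n, 0 < n /\ ramsey_bound Aob A n.

Definition recolor (C : Category) (A B F : Ob C) (chi : Hom A F -> nat) (w : Hom B F)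
  : Hom A B -> nat := fun f => chi (comp w f).

Definition essential_at (C : Category) (F A B : Ob C) (t : nat) (lam : Hom A B -> nat) : Prop :=
  coloring t lam /\
  forall k, 2 <= k -> forall chi : Hom A F -> nat, coloring k chi ->
    exists w : Hom B F,
      forall x y : Hom A B, lam x = lam y -> recolor chi w x = recolor chi w y.

Definition essential (C : Category) (Aob : Ob C -> Prop) (F A : Ob C) (t : nat)
  (gam : Hom A F -> nat) : Prop :=
  coloring t gam /\
  forall B : Ob C, Aob B -> arrow A B -> forall w : Hom B F,
    @essential_at C F A B t (recolor gam w).

(* Main.v *)
Require Import Defs.
From Stdlib Require Import List Arith Lia Classical ClassicalEpsilon FunctionalExtensionality.
Import ListNotations.

Definition chainP {T:Type} (le : T -> T -> Prop) (S : T -> Prop) :=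
  forall x y, S x -> S y -> le x y \/ le y x.

Inductive tw {T:Type} (le : T -> T -> Prop) (f : T -> T) (sup : (T -> Prop) -> T) : T -> Prop :=
| twf : forall x, tw le f sup x -> tw le f sup (f x)
| tws : forall S : T -> Prop, chainP le S -> (forall x, S x -> tw le f sup x) -> tw le f sup (sup S).

Lemma BW (T:Type) (le : T->T->Prop) (le_refl : forall x, le x x)
  (le_trans : forall x y z, le x y -> le y z -> le x z)
  (le_anti : forall x y, le x y -> le y x -> x = y) (f : T->T) (infl : forall x, le x (f x))
  (sup : (T->Prop) -> T)
  (sup_ub : forall S, chainP le S -> forall x, S x -> le x (sup S))
  (sup_lub : forall S y, chainP le S -> (forall x, S x -> le x y) -> le (sup S) y)
  (P : T -> Prop) (Pf : forall x, P x -> P (f x))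
  (Psup : forall S, chainP le S -> (forall x, S x -> P x) -> P (sup S)) :
  exists m, P m /\ f m = m.
Proof.
  set (TW := tw le f sup).
  set (ext := fun c => forall x, TW x -> le x c -> le c x \/ le (f x) c).
  assert (L1 : forall c, TW c -> ext c -> forall x, TW x -> le x c \/ le (f c) x).
  { intros c Hc Ec x Hx. induction Hx as [x Hx IH | S HS HSt IH].
    - destruct IH as [H|H].
      + destruct (Ec x Hx H) as [H2|H2].
        * assert (x = c) by (apply le_anti; auto). subst. right. apply le_refl.
        * left; exact H2.
      + right. eapply le_trans; [exact H| apply infl].
    - destruct (classic (exists x, S x /\ le (f c) x)) as [[x [Sx Hx]]|Hn].
      + right. eapply le_trans; [exact Hx|]. apply sup_ub; auto.
      + left. apply sup_lub; auto. intros x Sx. destruct (IH x Sx) as [H|H]; auto.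
        exfalso; apply Hn; eauto. }
  assert (L2 : forall c, TW c -> ext c).
  { intros c Hc. induction Hc as [c Hc IH | S HS HSt IH].
    - intros x Hx Hle. destruct (L1 c Hc IH x Hx) as [H|H].
      + destruct (IH x Hx H) as [H2|H2].
        * assert (x = c) by (apply le_anti; auto). subst. right. apply le_refl.
        * right. eapply le_trans; [exact H2|apply infl].
      + left; exact H.
    - intros y Hy Hle.
      destruct (classic (forall x, S x -> le x y)) as [Ha|Hn].
      + left. apply sup_lub; auto.
      + apply not_all_ex_not in Hn. destruct Hn as [x Hx].
        apply imply_to_and in Hx. destruct Hx as [Sx Hxy].
        destruct (L1 x (HSt x Sx) (IH x Sx) y Hy) as [H|H].
        * destruct (IH x Sx y Hy H) as [H2|H2]; [contradiction|].
          right. eapply le_trans; [exact H2|]. apply sup_ub; auto.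
        * exfalso. apply Hxy. eapply le_trans; [apply infl|exact H]. }
  assert (CH : chainP le TW).
  { intros x y Hx Hy. destruct (L1 y Hy (L2 y Hy) x Hx) as [H|H]; auto.
    right. eapply le_trans; [apply infl|exact H]. }
  assert (PT : forall x, TW x -> P x).
  { intros x Hx. induction Hx; auto. }
  set (m := sup TW).
  assert (Tm : TW m) by (apply tws; auto).
  exists m. split; auto.
  apply le_anti; auto. apply sup_ub; auto. apply twf; auto.
Qed.

Definition ple {X : Type} (p q : X -> option nat) := forall x v, p x = Some v -> q x = Some v.

Definition Phi {X I : Type} (t : nat) (Sat : I -> (X -> nat) -> Prop) (p : X -> option nat) :=
  forall (Ks : list I) (L : list X), exists c : X -> nat,
    (forall x, c x < t) /\ (forall i, In i Ks -> Sat i c) /\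
    (forall x v, In x L -> p x = Some v -> c x = v).

Lemma Phi_ext {X I : Type} (t : nat) (Sat : I -> (X -> nat) -> Prop) (p : X -> option nat) (x : X) :
  Phi t Sat p -> exists j, Phi t Sat (fun y => if excluded_middle_informative (y = x) then Some j else p y).
Proof.
  intros HP. apply NNPP. intro Hn.
  assert (Hb : forall j, exists Ks L, forall c, (forall x, c x < t) -> (forall i, In i Ks -> Sat i c) ->
     (forall y v, In y L -> p y = Some v -> c y = v) -> c x = j -> False).
  { intro j. assert (Hj : ~ Phi t Sat (fun y => if excluded_middle_informative (y = x) then Some j else p y)) by eauto.
    unfold Phi in Hj. apply not_all_ex_not in Hj. destruct Hj as [Ks Hj].
    apply not_all_ex_not in Hj. destruct Hj as [L Hj].
    exists Ks, (x :: L). intros c H1 H2 H3 H4. apply Hj. exists c. split; auto. split; auto.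
    intros y v Hy Hv. destruct (excluded_middle_informative (y = x)).
    - subst. congruence.
    - apply H3; simpl; auto. }
  assert (Hn2 : forall n, exists Ks L, forall j, j < n -> forall c, (forall x, c x < t) -> (forall i, In i Ks -> Sat i c) ->
     (forall y v, In y L -> p y = Some v -> c y = v) -> c x = j -> False).
  { induction n as [|n IH].
    - exists nil, nil. intros; lia.
    - destruct IH as [Ks [L IH]]. destruct (Hb n) as [Ks2 [L2 H2]].
      exists (Ks ++ Ks2), (L ++ L2). intros j Hj c H1 H3 H4 H5.
      assert (j < n \/ j = n) as [Hl|He] by lia.
      + eapply IH; eauto. intros; apply H3; apply in_or_app; auto.
        intros; apply H4; auto; apply in_or_app; auto.
      + subst. eapply H2; eauto. intros; apply H3; apply in_or_app; auto.
        intros; apply H4; auto; apply in_or_app; auto. }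
  destruct (Hn2 t) as [Ks [L H]]. destruct (HP Ks L) as [c [H1 [H2 H3]]].
  eapply (H (c x)); eauto.
Qed.

Lemma compactness (X I : Type) (t : nat) (Sat : I -> (X -> nat) -> Prop)
  (loc : forall i, exists L, forall c c', (forall x, In x L -> c x = c' x) -> Sat i c -> Sat i c')
  (fin : forall Ks : list I, exists c, (forall x, c x < t) /\ forall i, In i Ks -> Sat i c) :
  exists gam : X -> nat, (forall x, gam x < t) /\ forall i, Sat i gam.
Proof.
  set (f := fun p : X -> option nat =>
    match excluded_middle_informative (exists q, Phi t Sat q /\ ple p q /\ exists x, p x = None /\ q x <> None) with
    | left H => proj1_sig (constructive_indefinite_description _ H)
    | right _ => p end).
  set (sup := fun (S : (X -> option nat) -> Prop) (x : X) =>
    match excluded_middle_informative (exists v p, S p /\ p x = Some v) with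
    | left H => Some (proj1_sig (constructive_indefinite_description _ H))
    | right _ => None end).
  assert (supE : forall S x v, sup S x = Some v -> exists p, S p /\ p x = Some v).
  { intros S x v. unfold sup. destruct excluded_middle_informative as [H|H]; [|discriminate].
    destruct (constructive_indefinite_description _ H) as [w Hw]; simpl. intro E; inversion E; subst; auto. }
  assert (ub : forall S, chainP ple S -> forall p, S p -> ple p (sup S)).
  { intros S HS p Sp x v Hv. unfold sup. destruct excluded_middle_informative as [H|H].
    - destruct (constructive_indefinite_description _ H) as [w [q [Sq Hq]]]; simpl.
      destruct (HS p q Sp Sq) as [H1|H1].
      + apply H1 in Hv; congruence.
      + apply H1 in Hq; congruence.
    - exfalso; eauto. }
  assert (lub : forall S y, chainP ple S -> (forall p, S p -> ple p y) -> ple (sup S) y).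
  { intros S y HS Hy x v Hv. destruct (supE S x v Hv) as [p [Sp Hp]]. eapply Hy; eauto. }
  assert (infl : forall p, ple p (f p)).
  { intro p; unfold f; destruct excluded_middle_informative as [H|H].
    - destruct (constructive_indefinite_description _ H) as [q Hq]; simpl; tauto.
    - intros x v; auto. }
  assert (Pf : forall p, Phi t Sat p -> Phi t Sat (f p)).
  { intros p Hp; unfold f; destruct excluded_middle_informative as [H|H]; auto.
    destruct (constructive_indefinite_description _ H) as [q Hq]; simpl; tauto. }
  assert (Psup : forall S, chainP ple S -> (forall p, S p -> Phi t Sat p) -> Phi t Sat (sup S)).
  { intros S HS HP Ks L.
    assert (Hq : exists q, (S q \/ forall x, q x = None) /\
       forall x v, In x L -> sup S x = Some v -> q x = Some v).
    { induction L as [|a L IH].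
      - exists (fun _ => None). split; [right; auto| intros x v []].
      - destruct IH as [q [Hq1 Hq2]].
        destruct (sup S a) as [va|] eqn:Ea.
        + destruct (supE S a va Ea) as [pa [Spa Hpa]].
          destruct Hq1 as [Sq|Nq].
          * destruct (HS q pa Sq Spa) as [H1|H1].
            -- exists pa. split; auto. intros x v [<-|Hx] Hv; [congruence|]. apply H1; auto.
            -- exists q. split; auto. intros x v [<-|Hx] Hv; [|auto]. apply H1; congruence.
          * exists pa. split; auto. intros x v [<-|Hx] Hv; [congruence|].
            specialize (Hq2 x v Hx Hv). rewrite Nq in Hq2; discriminate.
        + exists q. split; auto. intros x v [<-|Hx] Hv; [congruence|auto]. }
    destruct Hq as [q [[Sq|Nq] Hq2]].
    - destruct (HP q Sq Ks L) as [c [H1 [H2 H3]]]. exists c. repeat split; auto.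
    - destruct (fin Ks) as [c [H1 H2]]. exists c. split; auto. split; auto.
      intros x v Hx Hv. specialize (Hq2 x v Hx Hv). rewrite Nq in Hq2; discriminate. }
  destruct (BW (X -> option nat) ple ltac:(intros p x v; auto)
    ltac:(intros p q r H1 H2 x v H; auto)
    ltac:(intros p q H1 H2; apply functional_extensionality; intro x;
          destruct (p x) eqn:E1; [ symmetry; auto| destruct (q x) eqn:E2; [ apply H2 in E2; congruence | reflexivity]])
    f infl sup ub lub (Phi t Sat) Pf Psup) as [m [Pm Fm]].
  assert (Tot : forall x, exists v, m x = Some v).
  { intro x. destruct (m x) as [v|] eqn:E; eauto. exfalso.
    destruct (Phi_ext t Sat m x Pm) as [j Hj].
    assert (H : exists q, Phi t Sat q /\ ple m q /\ exists x, m x = None /\ q x <> None).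
    { eexists; split; [exact Hj|]. split.
      - intros y v Hv. destruct excluded_middle_informative; [subst; congruence|auto].
      - exists x. split; auto. destruct excluded_middle_informative; [discriminate|tauto]. }
    revert Fm. unfold f. destruct excluded_middle_informative as [H'|H']; [|tauto].
    destruct (constructive_indefinite_description _ H') as [q Hq]; simpl. destruct Hq as [_ [_ [y [Hy1 Hy2]]]].
    intro Eq; rewrite Eq in Hy2; congruence. }
  exists (fun x => match m x with Some v => v | None => 0 end). split.
  - intro x. destruct (Tot x) as [v Hv]. destruct (Pm nil (x :: nil)) as [c [H1 [_ H3]]].
    rewrite Hv. rewrite <- (H3 x v); simpl; auto.
  - intro i. destruct (loc i) as [L HL]. destruct (Pm (i :: nil) L) as [c [H1 [H2 H3]]].
    apply (HL c); [|apply H2; simpl; auto].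
    intros x Hx. destruct (Tot x) as [v Hv]. rewrite Hv. eauto.
Qed.

Fixpoint alls (n t : nat) : list (list nat) :=
  match n with
  | 0 => [[]]
  | S n => flat_map (fun s => map (fun j => j :: s) (seq 0 t)) (alls n t)
  end.

Lemma alls_in t : forall s, (forall v, In v s -> v < t) -> In s (alls (length s) t).
Proof.
  induction s as [|a s IH]; intros H; simpl; auto.
  apply in_flat_map. exists s. split; [apply IH; intros; apply H; simpl; auto|].
  apply in_map_iff. exists a. split; auto. apply in_seq. specialize (H a (or_introl eq_refl)). lia.
Qed.

Lemma alls_lt t : forall n s, In s (alls n t) -> forall v, In v s -> v < t.
Proof.
  induction n as [|n IH]; simpl; intros s Hs v Hv.
  - destruct Hs as [<-|[]]. destruct Hv.
  - apply in_flat_map in Hs. destruct Hs as [s' [Hs' Hm]].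
    apply in_map_iff in Hm. destruct Hm as [j [<- Hj]]. apply in_seq in Hj.
    destruct Hv as [<-|Hv]; [lia|]. eapply IH; eauto.
Qed.

Fixpoint pos (c : nat) (l : list nat) : nat :=
  match l with [] => 0 | a :: l => if Nat.eqb a c then 0 else S (pos c l) end.

Lemma pos_lt c l : In c l -> pos c l < length l.
Proof.
  induction l as [|a l IH]; simpl; [tauto|]. intros [H|H].
  - subst. rewrite Nat.eqb_refl. lia.
  - destruct (Nat.eqb a c); [lia|]. specialize (IH H); lia.
Qed.

Lemma pos_nth c l : In c l -> nth (pos c l) l 0 = c.
Proof.
  induction l as [|a l IH]; simpl; [tauto|]. intros [H|H].
  - subst. rewrite Nat.eqb_refl. auto.
  - destruct (Nat.eqb a c) eqn:E; [apply Nat.eqb_eq in E; auto|]. auto.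
Qed.

Lemma mix_neq k a a' b b' : a < k -> a' < k -> a <> a' -> a + k * b <> a' + k * b'.
Proof.
  intros H1 H2 H3 E. apply H3.
  assert (k <> 0) by lia.
  rewrite <- (Nat.mod_small a k H1), <- (Nat.mod_small a' k H2).
  rewrite <- (Nat.Div0.mod_add a b k), <- (Nat.Div0.mod_add a' b' k).
  f_equal. lia.
Qed.

Lemma mix_lt k K a b : a < k -> b < K -> a + k * b < k * K.
Proof. intros; nia. Qed.

Lemma EP_exists (C : Category) (Aob : Ob C -> Prop) (F A D : Ob C) (t : nat)
  (tpos : 0 < t) (hU : universal Aob F) (tRB : ramsey_bound Aob A t) (HD : Aob D)
  (lD : list (Hom A D)) (HlD : forall g, In g lD) :
  exists lam : Hom A D -> nat, essential_at F t lam.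
Proof.
  set (idx := fun g => proj1_sig (constructive_indefinite_description _ (In_nth_error lD g (HlD g)))).
  assert (Hidx : forall g, nth_error lD (idx g) = Some g).
  { intro g. unfold idx. destruct constructive_indefinite_description; auto. }
  set (lam := fun (s : list nat) (g : Hom A D) => match nth_error s (idx g) with Some v => v | None => 0 end).
  set (Bad := fun s (chi : Hom A F -> nat) => forall w : Hom D F, exists x y,
          lam s x = lam s y /\ chi (comp w x) <> chi (comp w y)).
  apply NNPP. intro Hne.
  assert (Hb : forall s, In s (alls (length lD) t) -> exists k chi, 2 <= k /\ coloring k chi /\ Bad s chi).
  { intros s Hs.
    assert (Hc : coloring t (lam s)).
    { intro g. unfold lam. destruct (nth_error s (idx g)) eqn:E; auto.
      eapply alls_lt; eauto. eapply nth_error_In; eauto. }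
    assert (Hn : ~ essential_at F t (lam s)) by eauto.
    unfold essential_at in Hn.
    apply not_and_or in Hn. destruct Hn as [Hn|Hn]; [contradiction|].
    apply not_all_ex_not in Hn. destruct Hn as [k Hn].
    apply imply_to_and in Hn. destruct Hn as [Hk Hn].
    apply not_all_ex_not in Hn. destruct Hn as [chi Hn].
    apply imply_to_and in Hn. destruct Hn as [Hchi Hn].
    exists k, chi. split; auto. split; auto. intro w.
    apply NNPP. intro Hw. apply Hn. exists w. intros x y Hxy.
    apply NNPP. intro Hne2. apply Hw. exists x, y. split; auto. }
  assert (Hcomb : forall S : list (list nat), (forall s, In s S -> exists k chi, 2 <= k /\ coloring k chi /\ Bad s chi) ->
      exists K chi, 2 <= K /\ coloring K chi /\ forall s, In s S -> Bad s chi).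
  { induction S as [|s S IH]; intros HS.
    - exists 2, (fun _ => 0). split; auto. split; [intro; lia|]. intros s [].
    - destruct IH as [K [chi2 [HK [Hc2 HB2]]]]; [intros; apply HS; simpl; auto|].
      destruct (HS s (or_introl eq_refl)) as [k [chi1 [Hk [Hc1 HB1]]]].
      exists (k * K), (fun x => chi1 x + k * chi2 x). split; [nia|]. split.
      + intro x. apply mix_lt; auto.
      + intros s' [<-|Hs'] w.
        * destruct (HB1 w) as [x [y [H1 H2]]]. exists x, y. split; auto.
          apply mix_neq; auto.
        * destruct (HB2 s' Hs' w) as [x [y [H1 H2]]]. exists x, y. split; auto.
          intro E. apply H2.
          destruct (Nat.eq_dec (chi1 (comp w x)) (chi1 (comp w y))) as [e|ne].
          -- rewrite e in E. nia.
          -- exfalso. eapply mix_neq; [apply Hc1|apply Hc1|exact ne|exact E]. }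
  destruct (Hcomb _ Hb) as [K [chi [HK [Hchi HB]]]].
  destruct (tRB K HK D HD) as [Cc [HCc Hra]].
  destruct (hU Cc HCc) as [u].
  destruct (Hra (fun h => chi (comp u h)) ltac:(intro; apply Hchi)) as [w [l [Hl Hin]]].
  set (w' := comp u w).
  set (h := fun g => pos (chi (comp w' g)) l).
  assert (Hin' : forall g, In (chi (comp w' g)) l).
  { intro g. unfold w'. rewrite <- comp_assoc. apply Hin. }
  assert (Hs : In (map h lD) (alls (length lD) t)).
  { rewrite <- (length_map h lD). apply alls_in. intros v Hv.
    apply in_map_iff in Hv. destruct Hv as [g [<- _]]. unfold h.
    pose proof (pos_lt _ _ (Hin' g)). lia. }
  destruct (HB _ Hs w') as [x [y [H1 H2]]].
  apply H2. unfold lam in H1. rewrite !nth_error_map, !Hidx in H1. simpl in H1.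
  unfold h in H1. rewrite <- (pos_nth _ _ (Hin' x)), <- (pos_nth _ _ (Hin' y)), H1. auto.
Qed.

Theorem proposition3p6 (C : Category) (Cfin : Ob C -> Prop)
  (hC1 : C1 C) (hC3 : C3 Cfin) (hC4 : C4 Cfin) (hC5 : C5 Cfin)
  (Aob : Ob C -> Prop) (hA : forall X : Ob C, Aob X -> Cfin X)
  (F : Ob C) (hU : universal Aob F) (hLF : locally_finite Aob F)
  (hR : finite_ramsey_degrees Aob) :
  forall A : Ob C, Aob A -> forall t : nat, ramsey_degree_is Aob A t ->
    exists gam : Hom A F -> nat, @essential C Aob F A t gam.
Proof.
  intros A HA t [tpos [tRB _]].
  set (I := {B : Ob C & Hom B F}).
  set (Sat := fun (i : I) (c : Hom A F -> nat) =>
    Aob (projT1 i) -> essential_at F t (recolor c (projT2 i))).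
  assert (EP : forall D, Aob D -> exists lam : Hom A D -> nat, essential_at F t lam).
  { intros D HD. destruct (hC3 A D (hA A HA) (hA D HD)) as [lD HlD].
    eapply EP_exists; eauto. }
  destruct (compactness (Hom A F) I t Sat) as [gam [Hg1 Hg2]].
  - intros [B w]. destruct (classic (Aob B)) as [HB|HB].
    + destruct (hC3 A B (hA A HA) (hA B HB)) as [lB HlB].
      exists (map (fun f => comp w f) lB). intros c c' Hcc Hs HB'.
      assert (E : recolor c w = recolor c' w).
      { apply functional_extensionality. intro f. unfold recolor. apply Hcc.
        apply in_map; auto. }
      unfold Sat in *; simpl in *. rewrite <- E. auto.
    + exists nil. intros c c' _ _ HB'. exfalso; auto.
  - intros Ks.
    assert (Am : exists D (r : Hom D F), Aob D /\ forall i, In i Ks -> Aob (projT1 i) ->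
        exists v : Hom (projT1 i) D, comp r v = projT2 i).
    { induction Ks as [|[B w] Ks IH].
      - destruct (hU A HA) as [r]. exists A, r. split; auto. intros i [].
      - destruct IH as [D [r [HD Hv]]].
        destruct (classic (Aob B)) as [HB|HB].
        + destruct (hLF B D HB HD w r) as [D' [r' [p [q [HD' [E1 [E2 _]]]]]]].
          exists D', r'. split; auto. intros i [<-|Hi] Hi'.
          * exists p; auto.
          * destruct (Hv i Hi Hi') as [v Ev]. exists (comp q v).
            rewrite comp_assoc, E2. auto.
        + exists D, r. split; auto. intros i [<-|Hi] Hi'; [simpl in Hi'; contradiction|auto]. }
    destruct Am as [D [r [HD Hv]]].
    destruct (EP D HD) as [lam [Hlam1 Hlam2]].
    set (c := fun x : Hom A F =>
      match excluded_middle_informative (exists g, comp r g = x) with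
      | left H => lam (proj1_sig (constructive_indefinite_description _ H))
      | right _ => 0 end).
    assert (Hc : forall g, c (comp r g) = lam g).
    { intro g. unfold c. destruct excluded_middle_informative as [H|H]; [|exfalso; eauto].
      destruct constructive_indefinite_description as [g' Hg']; simpl.
      f_equal. apply (hC1 _ _ r). auto. }
    assert (Hct : forall x, c x < t).
    { intro x. unfold c. destruct excluded_middle_informative; auto. }
    exists c. split; auto.
    intros [B w] Hi HB. simpl in HB. destruct (Hv _ Hi HB) as [v Ev]. simpl in Ev.
    split.
    + intro x; apply Hct.
    + intros k Hk chi Hchi. destruct (Hlam2 k Hk chi Hchi) as [w' Hw'].
      exists (comp w' v). intros x y Hxy. unfold recolor in *.
      simpl in Hxy. rewrite <- Ev, <- !comp_assoc, !Hc in Hxy.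
      rewrite <- !comp_assoc. apply Hw'. auto.
  - exists gam. unfold essential. split; [exact Hg1|]. intros B HB _ w. apply (Hg2 (existT _ B w)). auto.
Qed.
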